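(* Let $\alpha\ge1$. Let $c$ and $h$ be two decision trees on $n$ propositional variables with at most $m$ nodes in total for both trees, let $D$ be an $\alpha$-log-Lipschitz distribution on $\{0,1\}^n$, and let $\rho=\log n$. There is a fixed polynomial $\mathrm{poly}(\cdot,\cdot,\cdot)$ (depending only on $\alpha$) such that for all $0<\varepsilon<\frac12$, if $\Pr_{x\sim D}[h(x)\ne c(x)]<\mathrm{poly}(\frac1m,\frac1n,\varepsilon)$, then $\mathsf{R}_\rho(c,h)<\varepsilon$.
   Context: A decision tree over $n$ propositional variables is a finite binary tree whose internal nodes are labelled by elements of $\{1,\dots,n\}$ and whose leaves are labelled $0$ or $1$; an input $x\in\{0,1\}^n$ determines a root-to-leaf path by descending to the left child at a node labelled $i$ if $x_i=0$ and to the right child if $x_i=1$, and the tree's output is the label of the reached leaf. A distribution $D$ on $\{0,1\}^n$ is $\alpha$-log-Lipschitz if $|\log D(x)-\log D(x')|\le\log\alpha$ whenever $x,x'$ differ in exactly one bit. Robust risk: $\mathsf{R}_\rho(c,h)=\Pr_{x\sim D}[\exists z\in B_\rho(x):c(z)\ne h(z)]$, where $B_\rho(x)$ is the Hamming ball of radius $\rho$ around $x$. *)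

(* Defs.v *)
From HB Require Import structures.
From mathcomp Require Import all_boot all_order all_algebra.
From mathcomp Require Import all_classical all_reals all_analysis.
Set Implicit Arguments. Unset Strict Implicit. Unset Printing Implicit Defensive.
Import Order.TTheory GRing.Theory Num.Theory.
Local Open Scope ring_scope.

Notation cube n := {ffun 'I_n -> bool}.

Inductive dtree (n : nat) : Type :=
| DLeaf of bool
| DNode of 'I_n & dtree n & dtree n.

Arguments DLeaf {n}.

Fixpoint dt_eval n (t : dtree n) (x : cube n) : bool :=
  match t with
  | DLeaf b => b
  | DNode i l r => if x i then dt_eval r x else dt_eval l x
  end.

Fixpoint dt_size n (t : dtree n) : nat :=
  match t with
  | DLeaf _ => 1
  | DNode _ l r => (dt_size l + dt_size r).+1
  end.

Definition hamming n (x z : cube n) : nat := #|[set i | x i != z i]|.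

Definition is_distr (R : realType) n (D : cube n -> R) : Prop :=
  (forall x, 0 <= D x) /\ \sum_(x : cube n) D x = 1.

Definition prob (R : realType) n (D : cube n -> R) (E : pred (cube n)) : R :=
  \sum_(x : cube n | E x) D x.

(* alpha-log-Lipschitz (log requires D > 0 everywhere). *)
Definition log_lipschitz (R : realType) n (alpha : R) (D : cube n -> R) : Prop :=
  (forall x, 0 < D x) /\
  forall x x' : cube n, hamming x x' = 1%N ->
    `|ln (D x) - ln (D x')| <= ln alpha.

Definition robust_risk (R : realType) n (D : cube n -> R) (rho : R)
    (c h : dtree n) : R :=
  prob D [pred x | [exists z : cube n,
                     ((hamming x z)%:R <= rho) && (dt_eval c z != dt_eval h z)]].

Definition poly3 (R : realType) (d : nat) (a : {ffun 'I_d * 'I_d * 'I_d -> R})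
    (x y z : R) : R :=
  \sum_(t : 'I_d * 'I_d * 'I_d) a t * x ^+ t.1.1 * y ^+ t.1.2 * z ^+ t.2.

Definition log2 (R : realType) (x : R) : R := ln x / ln 2.

(* Main.v *)
Require Import Defs.
From HB Require Import structures.
From mathcomp Require Import all_boot all_order all_algebra.
From mathcomp Require Import all_classical all_reals all_analysis.
From mathcomp Require Import ring lra zify.
Import Order.TTheory GRing.Theory Num.Theory.
Local Open Scope ring_scope.
Set Implicit Arguments. Unset Strict Implicit.

Definition flip n (i : 'I_n) (x : cube n) : cube n :=
  [ffun j => if j == i then ~~ x j else x j].

Lemma flipK n (i : 'I_n) : involutive (flip i).
Proof. by move=> x; apply/ffunP => j; rewrite !ffunE; case: eqP => // _; rewrite negbK. Qed.

Lemma flip_i n (i : 'I_n) x : flip i x i = ~~ x i.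
Proof. by rewrite ffunE eqxx. Qed.

Lemma flip_ne n (i j : 'I_n) x : j != i -> flip i x j = x j.
Proof. by rewrite ffunE => /negbTE ->. Qed.

Lemma hamming_flip n (i : 'I_n) x : hamming x (flip i x) = 1%N.
Proof.
rewrite /hamming (_ : [set j | x j != flip i x j] = [set i]) ?cards1 //.
apply/setP => j; rewrite !inE ffunE; case: (j == i); first by case: (x j).
by rewrite eqxx.
Qed.

Fixpoint paths n (t : dtree n) : seq (seq ('I_n * bool) * bool) :=
  match t with
  | DLeaf b => [:: ([::], b)]
  | DNode i l r => [seq ((i, false) :: p.1, p.2) | p <- paths l]
                ++ [seq ((i, true) :: p.1, p.2) | p <- paths r]
  end.

Definition sat n (pi : seq ('I_n * bool)) (z : cube n) := all (fun l => z l.1 == l.2) pi.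

Lemma paths_sound n (t : dtree n) p z : p \in paths t -> sat p.1 z -> dt_eval t z = p.2.
Proof.
elim: t p => [b|i l IHl r IHr] p /=; first by rewrite inE => /eqP ->.
rewrite mem_cat => /orP [] /mapP [q qin ->] /= /andP [/eqP -> sq].
  exact: IHl.
exact: IHr.
Qed.

Lemma paths_complete n (t : dtree n) z : exists2 p, p \in paths t & sat p.1 z.
Proof.
elim: t => [b|i l [q ql sq] r [q' qr sq']] /=; first by exists ([::], b); rewrite ?inE.
case Hz: (z i).
  exists ((i, true) :: q'.1, q'.2); last by rewrite /sat /= Hz eqxx.
  by rewrite mem_cat; apply/orP; right; apply/mapP; exists q'.
exists ((i, false) :: q.1, q.2); last by rewrite /sat /= Hz eqxx.
by rewrite mem_cat; apply/orP; left; apply/mapP; exists q.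
Qed.

Lemma size_paths n (t : dtree n) : (size (paths t) <= dt_size t)%N.
Proof.
elim: t => [b|i l IHl r IHr] //=.
rewrite size_cat !size_map; apply: leqW; exact: leq_add.
Qed.

Definition mis n (v x : cube n) (s : seq 'I_n) := count (fun i => x i != v i) s.

Lemma mis_flip n (i : 'I_n) v x s : i \notin s -> mis v (flip i x) s = mis v x s.
Proof.
move=> Hi; apply: eq_in_count => j js; rewrite flip_ne //.
by apply: contraNneq Hi => <-.
Qed.

Lemma mis_le_ham n (v x : cube n) s : uniq s -> (mis v x s <= hamming x v)%N.
Proof.
move=> us; rewrite /mis -size_filter /hamming.
have uf : uniq [seq i <- s | x i != v i] by exact: filter_uniq.
rewrite cardE; apply: uniq_leq_size => // j.
by rewrite mem_filter mem_enum inE => /andP [].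
Qed.

Lemma sat_iff n (pi : seq ('I_n * bool)) z0 z : sat pi z0 ->
  sat pi z = (mis z0 z (undup (map fst pi)) == 0%N).
Proof.
move=> s0; rewrite /mis -leqn0 leqNgt -has_count -all_predC.
have -> : all (predC (fun i => z i != z0 i)) (undup [seq i.1 | i <- pi])
        = all (predC (fun i => z i != z0 i)) [seq i.1 | i <- pi].
  by apply: eq_all_r => j; rewrite mem_undup.
rewrite all_map; apply: eq_in_all => l lin /=; rewrite negbK.
by move: s0 => /allP /(_ l lin) /eqP ->.
Qed.

Section Ana.
Variable R : realType.

Lemma lip_flip n (alpha : R) (D : cube n -> R) : 1 <= alpha -> log_lipschitz alpha D ->
  forall i x, D x <= alpha * D (flip i x).
Proof.
move=> ha [Dpos Hl] i x.
have H := le_trans (ler_norm _) (Hl x (flip i x) (hamming_flip i x)).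
have a0 : 0 < alpha by apply: lt_le_trans ha.
rewrite -ler_ln ?posrE ?mulr_gt0 // lnM ?posrE //; lra.
Qed.

Lemma sum_pair n (F : cube n -> R) (i : 'I_n) v :
  \sum_x F x = \sum_(x : cube n | x i == v i) (F x + F (flip i x)).
Proof.
rewrite (bigID (fun x : cube n => x i == v i)) /= big_split /=; congr (_ + _).
rewrite (reindex_inj (inv_inj (flipK i))) /=; apply: eq_bigl => x.
by rewrite flip_i; case: (x i); case: (v i).
Qed.

Definition Phi n (D : cube n -> R) v s t := \sum_x D x * t ^+ mis v x s.

Lemma Phi_cons n (D : cube n -> R) v i s t : i \notin s ->
  Phi D v (i :: s) t = \sum_(x : cube n | x i == v i) t ^+ mis v x s * (D x + t * D (flip i x)).
Proof.
move=> Hi; rewrite /Phi (sum_pair _ i v); apply: eq_bigr => x /eqP xi.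
have e1 : mis v x (i :: s) = mis v x s by rewrite /mis /= xi eqxx.
have e2 : mis v (flip i x) (i :: s) = (mis v x s).+1.
  by rewrite /mis /= flip_i xi -/(mis v (flip i x) s) mis_flip //; case: (v i).
by rewrite e1 e2 exprS; ring.
Qed.

Lemma Phi_split n (D : cube n -> R) v i s t : i \notin s ->
  Phi D v s t = \sum_(x : cube n | x i == v i) t ^+ mis v x s * (D x + D (flip i x)).
Proof.
move=> Hi; rewrite /Phi (sum_pair _ i v); apply: eq_bigr => x /eqP xi.
by rewrite mis_flip //; ring.
Qed.

Lemma core (a b t al : R) : 0 <= a -> 0 <= b -> a <= al * b -> b <= al * a -> 1 <= al ->
  0 <= t <= 1 ->
  a + t * b <= (al + t) / (1 + al) * (a + b) /\ (1 + al * t) / (1 + al) * (a + b) <= a + t * b.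
Proof.
move=> a0 b0 hab hba hal /andP [t0 t1].
have p : 0 < 1 + al by lra.
rewrite mulrAC ler_pdivlMr // mulrAC ler_pdivrMr //.
have h1 : 0 <= (1 - t) * (al * b - a) by apply: mulr_ge0; lra.
have h2 : 0 <= (1 - t) * (al * a - b) by apply: mulr_ge0; lra.
split; nra.
Qed.

Lemma Phi_bounds n (alpha : R) (D : cube n -> R) v s t : 1 <= alpha ->
  log_lipschitz alpha D -> is_distr D -> uniq s -> 0 <= t <= 1 ->
  ((1 + alpha * t) / (1 + alpha)) ^+ size s <= Phi D v s t /\
  Phi D v s t <= ((alpha + t) / (1 + alpha)) ^+ size s.
Proof.
move=> ha hl [D0 D1] + ht; elim: s => [|i s IH] /=.
  by move=> _; rewrite /Phi (eq_bigr (fun x => D x)) ?D1 ?expr0 // => x _; rewrite expr0 mulr1.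
move=> /andP [Hi us]; have [IHl IHu] := IH us.
have a0 : 0 < 1 + alpha by lra.
have hu : 0 <= (alpha + t) / (1 + alpha) by apply: divr_ge0; lra.
have hl0 : 0 <= (1 + alpha * t) / (1 + alpha) by apply: divr_ge0; nra.
have tp : 0 <= t by case/andP: ht.
have Dge : forall x, 0 <= D x by move=> x; exact: D0.
have hb : forall x, D (flip i x) <= alpha * D x.
  by move=> x; rewrite -{2}(flipK i x); exact: lip_flip.
split.
  apply: (@le_trans _ _ ((1 + alpha * t) / (1 + alpha) * Phi D v s t)).
    by rewrite exprS; apply: ler_wpM2l.
  rewrite Phi_cons // (Phi_split _ _ _ Hi) mulr_sumr; apply: ler_sum => x _.
  rewrite mulrCA; apply: ler_wpM2l; first exact: exprn_ge0.
  have [_ ] := core (Dge x) (Dge (flip i x)) (lip_flip ha hl i x) (hb x) ha ht.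
  done.
apply: (@le_trans _ _ ((alpha + t) / (1 + alpha) * Phi D v s t)); last first.
  by rewrite exprS; apply: ler_wpM2l.
rewrite Phi_cons // (Phi_split _ _ _ Hi) mulr_sumr; apply: ler_sum => x _.
rewrite mulrCA; apply: ler_wpM2l; first exact: exprn_ge0.
have [h _] := core (Dge x) (Dge (flip i x)) (lip_flip ha hl i x) (hb x) ha ht.
done.
Qed.

End Ana.

Section Main.
Variable R : realType.

Lemma geo_small (u c : R) : 0 < u < 1 -> 0 < c -> exists M, u ^+ M <= c.
Proof.
move=> /andP [u0 u1] c0.
set w := u^-1 - 1.
have w0 : 0 < w by rewrite /w subr_gt0 invf_gt1.
have bern : forall M : nat, 1 + M%:R * w <= u^-1 ^+ M.
  elim=> [|M IH]; first by rewrite mul0r addr0 expr0.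
  have e : u^-1 = 1 + w by rewrite /w; ring.
  rewrite exprS; rewrite e in IH *.
  have hp : 0 <= M%:R * w by apply: mulr_ge0 => //; exact: ltW.
  apply: (@le_trans _ _ ((1 + w) * (1 + M%:R * w))); last first.
    by apply: ler_wpM2l => //; lra.
  have := mulr_ge0 (ltW w0) hp; rewrite -natr1; nra.
have cw : 0 <= c^-1 / w by apply: divr_ge0; [rewrite invr_ge0; exact: ltW | exact: ltW].
exists (Num.Def.archi_bound (c^-1 / w)).
set M := Num.Def.archi_bound _.
have hM := archi_boundP cw; rewrite -/M in hM.
have : c^-1 < u^-1 ^+ M.
  apply: (lt_le_trans _ (bern M)).
  move: hM; rewrite ltr_pdivrMr //; lra.
rewrite exprVn -(ler_pV2 (x := c)) ?invrK; first by move/ltW.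
  by rewrite inE unitfE gt_eqF.
by rewrite inE unitfE (gt_eqF (exprn_gt0 _ u0)) exprn_gt0.
Qed.

Lemma probE n (D : cube n -> R) (P : pred (cube n)) :
  prob D P = \sum_x (P x)%:R * D x.
Proof.
rewrite /prob big_mkcond; apply: eq_bigr => x _.
by case: (P x); rewrite ?mul1r ?mul0r.
Qed.

Lemma le_sum_mem (T : eqType) (s : seq T) (f : T -> R) q :
  (forall q, 0 <= f q) -> q \in s -> f q <= \sum_(q' <- s) f q'.
Proof.
move=> f0; elim: s => [|a s IH] //; rewrite in_cons big_cons => /orP [/eqP ->|qs].
  by rewrite lerDl sumr_ge0.
by apply: (le_trans (IH qs)); rewrite lerDr.
Qed.

Lemma sum_lt (T : eqType) (s : seq T) (f : T -> R) b :
  (0 < size s)%N -> {in s, forall q, f q < b} -> \sum_(q <- s) f q < (size s)%:R * b.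
Proof.
elim: s => [|a s IH] //= _ fb; rewrite big_cons -natr1 mulrDl mul1r addrC.
have fa : f a < b by apply: fb; rewrite mem_head.
case: s IH fb => [|a' s'] IH fb; first by rewrite big_nil mul0r !add0r.
apply: ltrD => //; apply: IH => // q qs; apply: fb; by rewrite in_cons qs orbT.
Qed.

Lemma pow2_le (k n : nat) : (0 < n)%N -> k%:R <= log2 (n%:R : R) -> 2 ^+ k <= (n%:R : R).
Proof.
move=> n0; rewrite /log2 ler_pdivlMr; last by apply: ln_gt0; rewrite ltr1n.
have p2 : (0 : R) < 2 by [].
move=> H; rewrite -ler_ln ?posrE ?exprn_gt0 ?ltr0n // lnXn //.
by rewrite mulr_natl in H.
Qed.

Lemma mis_agree n (v z x : cube n) s : mis v z s = 0%N -> mis v x s = mis z x s.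
Proof.
move=> /eqP; rewrite -leqn0 leqNgt -has_count => /hasPn H.
by apply: eq_in_count => j js; have := H j js; rewrite negbK => /eqP ->.
Qed.

End Main.

Definition Bq (R : realType) n (p1 p2 : seq ('I_n * bool) * bool) : pred (cube n) :=
  [pred x | [exists z, [&& sat p1.1 z, sat p2.1 z, p1.2 != p2.2 &
                          ((hamming x z)%:R <= log2 (n%:R : R))]]].

Lemma cell_bound (R : realType) n (alpha : R) (D : cube n -> R) (c h : dtree n)
  (p1 p2 : seq ('I_n * bool) * bool) (theta : R) (M : nat) :
  1 <= alpha -> log_lipschitz alpha D -> is_distr D -> (0 < n)%N ->
  p1 \in paths c -> p2 \in paths h ->
  ((alpha + 2^-1) / (1 + alpha)) ^+ M <= (1 + alpha)^-1 -> 0 < theta ->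
  prob D [pred x | dt_eval h x != dt_eval c x] < theta ^+ M ->
  prob D (Bq R p1 p2) < n%:R * theta.
Proof.
move=> ha hl hd n0 p1in p2in hM th0 hdel.
have D0 : forall x, 0 <= D x by move=> x; case: hd => H _; exact: H.
have n0' : (0 : R) < n%:R by rewrite ltr0n.
case: (pickP (fun z => [&& sat p1.1 z, sat p2.1 z & p1.2 != p2.2])) => [z0 /and3P [s1 s2 lab] | none]; last first.
  rewrite probE big1 ?mulr_gt0 // => x _.
  case Bx: (Bq R p1 p2 x); last by rewrite mul0r.
  move/existsP: Bx => [z /and4P [a b c' _]].
  by move: (none z); rewrite a b c'.
set pi := p1.1 ++ p2.1; set K := undup (map fst pi).
have uK : uniq K by apply: undup_uniq.
have s0 : sat pi z0 by rewrite /sat all_cat; apply/andP; split.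
have cellE : forall x, sat pi x -> dt_eval h x != dt_eval c x.
  move=> x; rewrite /sat all_cat => /andP [x1 x2].
  by rewrite (paths_sound p2in x2) (paths_sound p1in x1) eq_sym.
have ht0 : 0 <= (0 : R) <= 1 by apply/andP; split; lra.
have ht1 : 0 <= (2^-1 : R) <= 1 by apply/andP; split; lra.
have [lo _] := Phi_bounds z0 ha hl hd uK ht0.
have [_ up] := Phi_bounds z0 ha hl hd uK ht1.
set del := prob D _ in hdel.
have phi0 : Phi D z0 K 0 <= del.
  rewrite /Phi /del probE; apply: ler_sum => x _; rewrite expr0n.
  case E: (mis z0 x K == 0)%N.
    have sx : sat pi x by rewrite (sat_iff x s0) E.
    by rewrite /= (cellE x sx) mulr1 mul1r.
  by rewrite mulr0; apply: mulr_ge0.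
have lowb : ((1 + alpha)^-1) ^+ size K <= del.
  by apply: le_trans phi0; move: lo; rewrite mulr0 addr0 div1r.
set u := (alpha + 2^-1) / (1 + alpha).
have u0 : 0 <= u by apply: divr_ge0; lra.
have probB : prob D (Bq R p1 p2) <= n%:R * u ^+ size K.
  apply: (@le_trans _ _ (n%:R * Phi D z0 K 2^-1)); last first.
    by apply: ler_wpM2l => //; exact: ltW.
  rewrite probE /Phi mulr_sumr; apply: ler_sum => x _.
  case Bx: (Bq R p1 p2 x); last first.
    by rewrite mul0r; apply: mulr_ge0; [exact: ltW | apply: mulr_ge0 => //; apply: exprn_ge0; lra].
  move/existsP: Bx => [z /and4P [z1 z2 _ hz]].
  have sz : sat pi z by rewrite /sat all_cat; apply/andP; split.
  have mz : mis z0 z K = 0%N by apply/eqP; rewrite -sat_iff.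
  rewrite (mis_agree x mz).
  have hk : (mis z x K <= hamming x z)%N by apply: mis_le_ham.
  have hk' : (mis z x K)%:R <= log2 (n%:R : R).
    by apply: le_trans hz; rewrite ler_nat.
  have h2k := pow2_le n0 hk'.
  rewrite mul1r mulrCA ler_peMr // exprVn ler_pdivlMr ?mul1r //.
rewrite (le_lt_trans probB) // ltr_pM2l //.
rewrite ltNge; apply/negP => H.
have : theta ^+ M <= del.
  apply: (le_trans _ lowb).
  apply: (@le_trans _ _ ((u ^+ size K) ^+ M)).
    by apply: lerXn2r; rewrite ?nnegrE ?exprn_ge0 // ltW.
  rewrite -exprM mulnC exprM.
  by apply: lerXn2r; rewrite ?nnegrE ?exprn_ge0 ?invr_ge0 //; lra.
by rewrite leNgt hdel.
Qed.
Unset Implicit Arguments.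

Lemma size_paths_gt0 n (t : dtree n) : (0 < size (paths t))%N.
Proof. by elim: t => //= i l IHl r IHr; rewrite size_cat size_map addn_gt0 IHl. Qed.

Lemma dt_size_gt0 n (t : dtree n) : (0 < dt_size t)%N.
Proof. by case: t. Qed.

Theorem theorem5p8 (R : realType) (alpha : R) (halpha : 1 <= alpha) :
  exists (d : nat) (a : {ffun 'I_d * 'I_d * 'I_d -> R}),
    (forall (m n : nat) (eps : R), (0 < m)%N -> (0 < n)%N -> 0 < eps < 2^-1 ->
        0 < poly3 a (m%:R^-1) (n%:R^-1) eps) /\
    forall (n m : nat) (c h : dtree n) (D : cube n -> R),
      (0 < n)%N ->
      (dt_size c + dt_size h <= m)%N ->
      is_distr D ->
      log_lipschitz alpha D ->
      forall eps : R, 0 < eps < 2^-1 ->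
        prob D [pred x | dt_eval h x != dt_eval c x]
          < poly3 a (m%:R^-1) (n%:R^-1) eps ->
        robust_risk D (log2 (n%:R)) c h < eps.
Proof.
set u := (alpha + 2^-1) / (1 + alpha).
have a1 : 0 < 1 + alpha by lra.
have [M hM] : exists M, u ^+ M <= (1 + alpha)^-1.
  apply: geo_small; last by rewrite invr_gt0.
  apply/andP; split; first by apply: divr_gt0; lra.
  by rewrite ltr_pdivrMr // mul1r; lra.
exists (2 * M).+1.
set t0 : 'I_(2 * M).+1 * 'I_(2 * M).+1 * 'I_(2 * M).+1 := (inord (2 * M), inord M, inord M).
exists [ffun t => if t == t0 then (1 : R) else 0].
have pE : forall x y z : R, poly3 [ffun t => if t == t0 then (1 : R) else 0] x y z
    = x ^+ (2 * M) * y ^+ M * z ^+ M.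
  move=> x y z; rewrite /poly3 (bigD1 t0) //= big1 => [|t /negbTE tne]; last first.
    by rewrite ffunE tne !mul0r.
  rewrite addr0 ffunE eqxx mul1r /t0 /= !inordK //; lia.
split.
  move=> m n eps m0 n0 /andP [e0 _]; rewrite pE.
  by rewrite !mulr_gt0 // exprn_gt0 // invr_gt0 ltr0n.
move=> n m c h D n0 hm hd hl eps /andP [e0 e1] hdel.
have m0 : (0 < m)%N.
  by apply: leq_trans hm; rewrite addn_gt0 dt_size_gt0.
have D0 : forall x, 0 <= D x by move=> x; case: hd => H _; exact: H.
set th := eps * (m%:R^-1) ^+ 2 * n%:R^-1.
have th0 : 0 < th by rewrite /th !mulr_gt0 // ?exprn_gt0 // invr_gt0 ltr0n.
have hth : poly3 [ffun t => if t == t0 then (1 : R) else 0] (m%:R^-1) (n%:R^-1) eps = th ^+ M.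
  by rewrite pE /th exprM -!exprMn; congr (_ ^+ _); ring.
rewrite hth in hdel.
set s := [seq (p1, p2) | p1 <- paths c, p2 <- paths h].
have step1 : robust_risk D (log2 n%:R) c h <= \sum_(q <- s) prob D (Bq R q.1 q.2).
  rewrite (eq_bigr (fun q => \sum_x (Bq R q.1 q.2 x)%:R * D x)); last first.
    by move=> q _; rewrite probE.
  rewrite exchange_big /= /robust_risk probE; apply: ler_sum => x _.
  rewrite -mulr_suml.
  case Bx: ([pred x | [exists z, ((hamming x z)%:R <= log2 n%:R) && (dt_eval c z != dt_eval h z)]] x).
    rewrite mul1r ler_peMl //.
    move: Bx => /= /existsP [z /andP [hz hcz]].
    have [p1 p1in s1] := paths_complete c z.
    have [p2 p2in s2] := paths_complete h z.
    have qs : (p1, p2) \in s by apply: allpairs_f.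
    have Bqx : Bq R p1 p2 x.
      apply/existsP; exists z; rewrite s1 s2 hz andbT /=.
      by rewrite -(paths_sound p1in s1) -(paths_sound p2in s2).
    apply: le_trans (le_sum_mem _ qs) => [|q]; first by rewrite /= Bqx.
    by rewrite ler0n.
  by rewrite mul0r; apply: mulr_ge0 => //; apply: sumr_ge0 => q _; rewrite ler0n.
have step2 : {in s, forall q, prob D (Bq R q.1 q.2) < n%:R * th}.
  move=> q /allpairsP [[p1 p2] [/= p1in p2in ->]].
  exact: (cell_bound halpha hl hd n0 p1in p2in hM th0 hdel).
have ss0 : (0 < size s)%N by rewrite size_allpairs muln_gt0 !size_paths_gt0.
apply: le_lt_trans step1 _.
apply: lt_le_trans (sum_lt ss0 step2) _.
have hs : ((size s)%:R : R) <= m%:R * m%:R.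
  rewrite -natrM ler_nat size_allpairs; apply: leq_mul.
    by apply: leq_trans hm; apply: leq_trans (size_paths c) (leq_addr _ _).
  by apply: leq_trans hm; apply: leq_trans (size_paths h) (leq_addl _ _).
have nt : 0 <= n%:R * th by apply: mulr_ge0; [exact: ler0n | exact: ltW].
apply: le_trans (ler_wpM2r nt hs) _.
have mn : (m%:R : R) != 0 by rewrite pnatr_eq0 -lt0n.
have nn : (n%:R : R) != 0 by rewrite pnatr_eq0 -lt0n.
rewrite /th le_eqVlt; apply/orP; left; apply/eqP; field.
by rewrite mn nn.
Qed.
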